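(* In the construction below, if there exists an admissible solution $E^*$ of the constructed CSCN instance, then there exists a connected subgraph $H$ of $G'$ with $S\subseteq V(H)$ and $|E(H)|\le 2k$ (an admissible solution of the Steiner Tree instance).
   Context: Let $G'=(V',E')$ be a connected undirected graph, let $S=\{u_1,\dots,u_s\}\subseteq V'$ with $s=|S|$, and let $k\ge 0$ be a real number with $|E'|\ge 2k$. (Viewing every edge of $G'$ as having weight $\frac12$, the Steiner Tree instance asks for a connected subgraph $H$ of $G'$ with $S\subseteq V(H)$ and total edge weight at most $k$, i.e. $|E(H)|\le 2k$.) Let $t\ge 1$ be an integer. Let $V = V'\cup\{v_{i,j} : 1\le i\le s,\ 1\le j\le t\}$ (the $v_{i,j}$ are new vertices) and let $E$ be the set of all pairs of vertices of $V$ (edges undirected). Define $w^*:E\to\mathbb{R}$ by: $w^*(\{v_{i,j},u_i\})=1$ for all $i,j$; $w^*(\{v_{i,j},u\})=0$ for every $u\in V\setminus\{u_i\}$; $w^*(e)=\frac12$ for every $e\in E'$; $w^*(\{u,u'\})=0$ for $u,u'\in V'$ with $\{u,u'\}\notin E'$. Set $A=\frac{st+k}{st+2k}$ and $B=\frac{\frac12(|E'|-2k)}{st+2k}$. For nonempty $E^*\subseteq E$ let $\alpha(E^* )=\frac{\sum_{e\in E^*}w^*(e)}{|E^*|}$ and $\beta(E^* )=\frac{\sum_{e\in E\setminus E^*}w^*(e)}{|E^*|}$. The graph induced by $E^*$ has vertex set the vertices incident to some edge of $E^*$ and edge set $E^*$. An admissible solution of the constructed CSCN instance is a nonempty $E^*\subseteq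 E$ whose induced graph is connected and which satisfies $\alpha(E^* )\ge A$ and $\beta(E^* )\le B$. *)

(* Defs.v *)
From mathcomp Require Import all_boot all_order all_algebra.
Set Implicit Arguments. Unset Strict Implicit. Unset Printing Implicit Defensive.
Import Order.TTheory GRing.Theory Num.Theory.
Local Open Scope ring_scope.

(* Graphs are given by a vertex set W : {set T} and an edge set
   F : {set {set T}} (edges are 2-element subsets). *)

Definition F_adj (T : finType) (F : {set {set T}}) : rel T :=
  fun x y => [exists e in F, (x \in e) && (y \in e)].

Definition is_connected (T : finType) (W : {set T}) (F : {set {set T}}) : Prop :=
  W != set0 /\ {in W &, forall x y, connect (F_adj F) x y}.

Definition induced_vertices (T : finType) (F : {set {set T}}) : {set T} :=
  \bigcup_(e in F) e.

(* vertex set V = V' + {v_{i,j}} ; inl x = x in V', inr (i,j) = v_{i,j} *)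
Definition Vc (V' : finType) (s t : nat) : finType := (V' + ('I_s * 'I_t))%type.

Definition all_pairs (T : finType) : {set {set T}} := [set e : {set T} | #|e| == 2%N].

Definition lift_edge (V' : finType) (s t : nat) (f : {set V'}) : {set Vc V' s t} :=
  [set inl x | x in f].

Definition wstar (R : realFieldType) (V' : finType) (s t : nat)
  (E' : {set {set V'}}) (u : 'I_s -> V') (e : {set Vc V' s t}) : R :=
  if [exists i : 'I_s, exists j : 'I_t,
        e == [set (inr (i, j) : Vc V' s t); inl (u i)]] then 1
  else if e \in [set lift_edge s t f | f in E'] then 1 / 2
  else 0.

Definition alpha (R : realFieldType) (T : finType) (w : {set T} -> R)
  (Es : {set {set T}}) : R :=
  (\sum_(e in Es) w e) / (#|Es|%:R).

Definition beta (R : realFieldType) (T : finType) (w : {set T} -> R)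
  (Es : {set {set T}}) : R :=
  (\sum_(e in all_pairs T :\: Es) w e) / (#|Es|%:R).

(* Main.v *)
Require Import Defs.
From mathcomp Require Import all_boot all_order all_algebra.
From mathcomp Require Import ring lra.
Import Order.TTheory GRing.Theory Num.Theory.
Local Open Scope ring_scope.

Lemma alg (R : realFieldType) (st n k x y z : R) : 0 < st -> 0 <= k -> 2*k <= n ->
  0 <= x -> x <= st -> 0 <= y -> y <= n -> 0 <= z -> 0 < x + y + z ->
  (st + k) / (st + 2 * k) <= (x + 1/2 * y) / (x + y + z) ->
  ((st - x) + 1/2 * (n - y)) / (x + y + z) <= (1/2 * (n - 2 * k)) / (st + 2 * k) ->
  [/\ x = st, z = 0 & y <= 2 * k].
Proof.
move=> hst hk hkn hx hxs hy hyn hz hm h1 h2.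
have hD : 0 < st + 2 * k by lra.
move: h1; rewrite ler_pdivrMr // (mulrAC _ _ (st + 2 * k)) ler_pdivlMr // => h1.
move: h2; rewrite ler_pdivrMr // (mulrAC _ _ (x + y + z)) ler_pdivlMr // => h2.
set e := st - x.
set q := (y - 2 * k) / 2 - e.
have E1 : st * q <= - (st + k) * (e + z) by rewrite /q /e; nra.
have E2 : (st + n) * q >= - (n / 2 - k) * (e + z) by rewrite /q /e; nra.
have P : 0 < (st + k) * (st + n) - (n / 2 - k) * st by nra.
have hez : e + z <= 0.
  have F1 := ler_wpM2r (ltW (addr_gt0 hst (le_lt_trans hy (le_lt_trans hyn (ltr_pwDl hst (lexx n)))))) E1.
  have F2 := ler_wpM2l (ltW hst) E2.
  have : ((st + k) * (st + n) - (n / 2 - k) * st) * (e + z) <= 0.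
    move: F1 F2; set a := e + z; move=> F1 F2; nra.
  by rewrite pmulr_rle0.
have he : e = 0 by move: hez; rewrite /e; lra.
have hz0 : z = 0 by move: hez; rewrite he; lra.
split.
- by move: he; rewrite /e; lra.
- exact: hz0.
- have : st * q <= 0 by move: E1; rewrite he hz0; nra.
  rewrite pmulr_rle0 // /q he; lra.
Qed.

Theorem lemma4 (R : realFieldType) (V' : finType) (E' : {set {set V'}})
  (s t : nat) (u : 'I_s -> V') (k : R)
  (hE' : forall e, e \in E' -> #|e| = 2%N)
  (hconn : is_connected [set: V'] E')
  (hu : injective u)
  (hk : 0 <= k) (hEk : 2 * k <= #|E'|%:R)
  (ht : (1 <= t)%N)
  (Es : {set {set Vc V' s t}})
  (hEsE : Es \subset all_pairs (Vc V' s t))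
  (hEs0 : Es != set0)
  (hEsconn : is_connected (induced_vertices Es) Es)
  (halpha : alpha (wstar R E' u) Es >=
            ((s * t)%N%:R + k) / ((s * t)%N%:R + 2 * k))
  (hbeta : beta (wstar R E' u) Es <=
           (1 / 2 * (#|E'|%:R - 2 * k)) / ((s * t)%N%:R + 2 * k)) :
  exists (W : {set V'}) (F : {set {set V'}}),
    [/\ F \subset E',
        (forall e, e \in F -> e \subset W),
        is_connected W F,
        (forall i : 'I_s, u i \in W) &
        #|F|%:R <= 2 * k].
Proof.
have [s0|spos] := posnP s.
  case: hconn => /set0Pn [v _] _.
  exists [set v], set0; split.
  - exact: sub0set.
  - by move=> e; rewrite inE.
  - split; first by apply/set0Pn; exists v; rewrite inE.
    by move=> a b; rewrite !inE => /eqP-> /eqP->; exact: connect0.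
  - by move=> i; exfalso; have := ltn_ord i; rewrite {2}s0.
  - by rewrite cards0 mulr_ge0.
pose T := Vc V' s t.
pose hf (p : 'I_s * 'I_t) : {set T} := [set (inr p : T); inl (u p.1)].
pose heavy : {set {set T}} := [set e | [exists i : 'I_s, exists j : 'I_t,
        e == [set (inr (i, j) : Vc V' s t); inl (u i)]]].
pose light : {set {set T}} := [set lift_edge s t f | f in E'].
have heavyE : heavy = hf @: setT.
  apply/setP => e; rewrite !inE; apply/existsP/imsetP.
  - by case=> i /existsP [j /eqP ->]; exists (i, j).
  - by case=> [[i j]] _ ->; exists i; apply/existsP; exists j.
have hf_inj : injective hf.
  move=> p p' E; have : (inr p : T) \in hf p' by rewrite -E !inE eqxx.
  by rewrite !inE => /orP [/eqP [] | /eqP].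
have cardH : #|heavy| = (s * t)%N by rewrite heavyE card_imset // cardsT card_prod !card_ord.
have lift_inj : injective (@lift_edge V' s t).
  have injl : injective (@inl V' ('I_s * 'I_t)) by move=> ? ? [].
  move=> a b; rewrite /lift_edge => E; exact: (imset_inj injl E).
have cardL : #|light| = #|E'| by rewrite card_imset.
have disj : forall e, e \in heavy -> e \notin light.
  move=> e; rewrite heavyE => /imsetP [p _ ->]; apply/negP => /imsetP [f _].
  move/setP/(_ (inr p)); rewrite !inE eqxx /=.
  by move/esym/imsetP => [x _].
have hw : forall e, wstar R E' u e = (e \in heavy)%:R + 1/2 * (e \in light)%:R.
  move=> e; rewrite /wstar.
  have -> : [exists i : 'I_s, exists j : 'I_t,
        e == [set (inr (i, j) : Vc V' s t); inl (u i)]] = (e \in heavy) by rewrite inE.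
  case: (boolP (e \in heavy)) => eh.
    by rewrite (negbTE (disj e eh)) mulr0 addr0.
  by case: (e \in light); rewrite /= ?mulr1 ?mulr0 add0r.
have cnt : forall X H : {set {set T}}, \sum_(e in X) ((e \in H)%:R : R) = #|X :&: H|%:R.
  move=> X H; rewrite -[#|X :&: H|]sum1_card natr_sum big_mkcond /= [RHS]big_mkcond /=.
  by apply: eq_bigr => e _; rewrite inE; case: (e \in X); case: (e \in H).
have sumE : forall X : {set {set T}}, \sum_(e in X) wstar R E' u e = #|X :&: heavy|%:R + 1/2 * #|X :&: light|%:R.
  move=> X; rewrite (eq_bigr _ (fun e _ => hw e)) big_split /= -mulr_sumr.
  by rewrite !cnt.
have HAP : heavy \subset all_pairs T.
  apply/subsetP => e; rewrite heavyE => /imsetP [p _ ->].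
  by rewrite inE cards2.
have LAP : light \subset all_pairs T.
  apply/subsetP => e /imsetP [f fE ->].
  have injl : injective (@inl V' ('I_s * 'I_t)) by move=> ? ? [].
  by rewrite inE /lift_edge card_imset // hE'.
pose x := #|Es :&: heavy|.
pose y := #|Es :&: light|.
pose z := #|Es :\: (heavy :|: light)|.
have cardEs : #|Es| = (x + y + z)%N.
  rewrite -(cardsID (heavy :|: light) Es) setIUr cardsU.
  have -> : Es :&: heavy :&: (Es :&: light) = set0.
    apply/setP => e; rewrite !in_setI in_set0.
    case eh: (e \in heavy); last by rewrite !andbF.
    by rewrite (negbTE (disj e eh)) !andbF.
  by rewrite cards0 subn0.
have xle : (x <= s * t)%N by rewrite -cardH subset_leq_card // subsetIr.
have yle : (y <= #|E'|)%N by rewrite -cardL subset_leq_card // subsetIr.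
have cH : (all_pairs T :\: Es) :&: heavy = heavy :\: Es.
  apply/setP => e; rewrite !in_setI !in_setD; case eh: (e \in heavy); rewrite ?andbF //.
  by rewrite (subsetP HAP e eh) !andbT.
have cL : (all_pairs T :\: Es) :&: light = light :\: Es.
  apply/setP => e; rewrite !in_setI !in_setD; case eh: (e \in light); rewrite ?andbF //.
  by rewrite (subsetP LAP e eh) !andbT.
have stpos : (0 < s * t)%N by rewrite muln_gt0 spos.
have [hx hz hy] : [/\ (x%:R : R) = (s * t)%N%:R, (z%:R : R) = 0 & (y%:R : R) <= 2 * k].
  apply: (@alg R _ #|E'|%:R) => //.
  - by rewrite ltr0n.
  - by rewrite ler_nat.
  - by rewrite ler_nat.
  - by rewrite -!natrD -cardEs ltr0n card_gt0.
  - by move: halpha; rewrite /alpha sumE cardEs !natrD.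
  - move: hbeta; rewrite /beta sumE cardEs !natrD cH cL !cardsD.
    by rewrite !(setIC _ Es) cardH cardL !natrB.
have hxn : x = (s * t)%N by apply/eqP; rewrite -(eqr_nat R) hx.
have hzn : z = 0%N by apply/eqP; rewrite -(eqr_nat R) hz.
have HEs : heavy \subset Es.
  have E : Es :&: heavy = heavy.
    by apply/eqP; rewrite eqEcard subsetIr /= cardH -/x hxn.
  by rewrite -E subsetIl.
have EsHL : Es \subset heavy :|: light.
  by rewrite -setD_eq0; apply/eqP/cards0_eq.
pose F := [set f in E' | lift_edge s t f \in Es].
have cardF : #|F| = y.
  rewrite /y.
  have -> : Es :&: light = lift_edge s t @: F.
    apply/setP => e; rewrite in_setI; apply/andP/imsetP.
    - case=> eEs /imsetP [f fE ef]; exists f => //.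
      by rewrite inE fE -ef.
    - case=> f; rewrite inE => /andP [fE fEs] ->; split => //.
      exact: imset_f.
  by rewrite card_imset.
pose W := [set v : V' | (inl v : T) \in induced_vertices Es].
pose g (v : T) : V' := match v with inl a => a | inr p => u p.1 end.
have step : forall a b : T, F_adj Es a b -> connect (F_adj F) (g a) (g b).
  move=> a b /existsP [e /andP [eEs /andP [ae be]]].
  have := subsetP EsHL e eEs; rewrite in_setU => /orP [eh | el].
  - move: eh ae be; rewrite heavyE => /imsetP [p _ ->].
    by rewrite !inE => /orP [/eqP->|/eqP->] /orP [/eqP->|/eqP->] /=; exact: connect0.
  - case/imsetP: el => f fE ef; rewrite ef in eEs ae be.
    move: ae be; rewrite /lift_edge => /imsetP [a' a'f ->] /imsetP [b' b'f ->] /=.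
    apply: connect1; apply/existsP; exists f.
    by rewrite inE fE eEs a'f b'f.
have proj : forall a b : T, connect (F_adj Es) a b -> connect (F_adj F) (g a) (g b).
  move=> a b /connectP [p pth ->]; elim: p a pth => [|c p IH] a /=.
    by move=> _; exact: connect0.
  case/andP => h1 h2; exact: connect_trans (step _ _ h1) (IH c h2).
have j0 : 'I_t := Ordinal ht.
have uW : forall i, u i \in W.
  move=> i; rewrite inE; apply/bigcupP; exists (hf (i, j0)).
    by apply: (subsetP HEs); rewrite heavyE imset_f.
  by rewrite !inE eqxx orbT.
exists W, F; split.
- by apply/subsetP => f; rewrite inE => /andP [].
- move=> f; rewrite inE => /andP [fE fEs]; apply/subsetP => v vf.
  rewrite inE; apply/bigcupP; exists (lift_edge s t f) => //.
  by rewrite /lift_edge imset_f.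
- split; first by apply/set0Pn; exists (u (Ordinal spos)).
  move=> a b; rewrite !inE => ha hb.
  exact: (proj (inl a) (inl b) (hEsconn.2 _ _ ha hb)).
- exact: uW.
- by rewrite cardF.
Qed.
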